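(* Consider one time step (from time $t-1$ to time $t$, $t\ge1$) of the multi-class stochastic six-vertex model with classes $\{1,\dots,n\}$ and finitely many particles, and let $p_{t-1}^{(r)}(k)$ and $p_t^{(r)}(k)$ denote the positions before and after the step of the $k$-th particle of class $r$ (class-$r$ particles tagged in increasing order of position). Then for every integer $v\ge0$, every $r\in[1,n]$ and every label $k$, $$\mathbb P\big[p_t^{(r)}(k)-p_{t-1}^{(r)}(k)\ge v\big]\le b_2^{v-1}.$$
   Context: Fix $0<b_1<b_2<1$. Multi-class stochastic six-vertex dynamics: each site of $\mathbb Z$ holds nothing or a particle of class $r\in\{1,\dots,n\}$. One step uses independent $\chi^{(r)}(x)$ ($P[=1]=b_1$, else 0) and $j^{(r)}(x)$ ($P[=m]=(1-b_2)b_2^{m-1}$, $m\ge1$). Particles are updated in increasing class order and, within a class, from left to right. For the $k$-th class-$r$ particle at $x$, with the $(k+1)$-th class-$r$ particle at old position $y$ ($\infty$ if none): (a) it stays if some particle of class $<r$ jumped this step from a site $<x$ to a site $>x$; (b) otherwise it moves if site $x$ is already occupied at the new time by a class-$<r$ particle or by the $(k-1)$-th class-$r$ particle; (c) otherwise it stays if $\chi^{(r)}(x)=1$ and moves if $\chi^{(r)}(x)=0$. If it moves, its new position is $\min\{U,V,y\}$, where $U$ is the least site $>x$ that is the old position of a class-$<r$ particle that moved in this step, and $V$ is the site reached by advancing $j^{(r)}(x)$ sites to the right of $x$, not counting sites occupied by class-$<r$ particles that stayed. *)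

(* Defs.v *)
From HB Require Import structures.
From mathcomp Require Import all_boot all_order all_algebra.
From mathcomp Require Import all_classical all_reals all_analysis.
Set Implicit Arguments. Unset Strict Implicit. Unset Printing Implicit Defensive.
Import Order.TTheory GRing.Theory Num.Theory.
Local Open Scope ring_scope.

(* A configuration is eta : int -> nat, eta x = 0 means site x is empty,
   eta x = r >= 1 means site x holds a particle of class r.
   All particles lie in the box [a, a + W). *)

(* Old positions of the class-r particles, listed in increasing order
   (so the k-th element, k counted from 1, is p_{t-1}^{(r)}(k)). *)
Definition positions (eta : int -> nat) (a : int) (W : nat) (r : nat) : seq int :=
  [seq x <- [seq a + (i%:Z) | i <- iota 0 W] | eta x == r].

Definition count_free (s : seq int) (x : int) (d : nat) : nat :=
  count (fun i : nat => (x + (i.+1)%:Z) \notin s) (iota 0 d).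

(* V: the site reached by advancing j sites to the right of x, not counting
   the sites in s: x + (least d with exactly j free sites in {x+1..x+d}). *)
Definition advance (s : seq int) (x : int) (j : nat) : int :=
  x + (find (fun d => count_free s x d == j) (iota 0 (j + size s).+1))%:Z.

Definition omin (o : option int) (z : int) : int :=
  if o is Some u then Num.min u z else z.

Definition ominl (s : seq int) : option int :=
  if s is u :: s' then Some (foldr Num.min u s') else None.

(* Update of the class-r particles, left to right.
   lower = (old, new) positions of all particles of class < r (already updated),
   chi x, j x = chi^{(r)}(x), j^{(r)}(x),
   prev = new position of the (k-1)-th class-r particle (None if k = 1),
   ps = old positions of the class-r particles k, k+1, ... *)
Fixpoint step_class (lower : seq (int * int)) (chi : int -> bool)
    (j : int -> nat) (prev : option int) (ps : seq int) : seq (int * int) :=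
  match ps with
  | [::] => [::]
  | x :: rest =>
    let moved := [seq pr <- lower | pr.1 != pr.2] in
    let stayed := [seq pr.1 | pr <- lower & pr.1 == pr.2] in
    let ca := has (fun pr => (pr.1 < x) && (x < pr.2)) moved in
    let cb := has (fun pr => pr.2 == x) lower || (prev == Some x) in
    let stays := ca || (~~ cb && chi x) in
    let U := ominl [seq pr.1 | pr <- moved & x < pr.1] in
    let V := advance stayed x (j x) in
    let y := ohead rest in
    let nx := if stays then x else omin U (omin y V) in
    (x, nx) :: step_class lower chi j (Some nx) rest
  end.

(* Run classes 1, ..., m in increasing order; the r-th entry (r counted from 1)
   is the list of (old, new) positions of the class-r particles, tagged in
   increasing order of old position. *)
Fixpoint run (eta : int -> nat) (a : int) (W : nat)
    (chi : nat -> int -> bool) (j : nat -> int -> nat) (m : nat)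
    : seq (seq (int * int)) :=
  match m with
  | 0 => [::]
  | m'.+1 =>
    let prev := run eta a W chi j m' in
    rcons prev (step_class (flatten prev) (chi m) (j m) None (positions eta a W m))
  end.

Definition displacement eta a W chi j (n r k : nat) : int :=
  let pr := nth (0, 0) (nth [::] (run eta a W chi j n) r.-1) k.-1 in
  pr.2 - pr.1.

(* Randomness: omega (r', i) = (chi, m) encodes chi^{(r'+1)}(a+i) = chi and
   j^{(r'+1)}(a+i) = m+1, for sites in the box (the only sites queried). *)
Definition Omega (n W : nat) := {ffun 'I_n * 'I_W -> bool * nat}.

Definition lookup (n W : nat) (a : int) (om : Omega n W) (r : nat) (x : int)
  : bool * nat :=
  if [pick i : 'I_n * 'I_W | ((i.1 : nat) == r.-1) && (a + (i.2 : nat)%:Z == x)]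
     is Some i then om i else (false, 0%N).

Definition chi_of n W a (om : Omega n W) (r : nat) (x : int) : bool :=
  (lookup a om r x).1.
Definition j_of n W a (om : Omega n W) (r : nat) (x : int) : nat :=
  (lookup a om r x).2.+1.

Definition weight (R : realType) (b1 b2 : R) n W (om : Omega n W) : R :=
  \prod_(i : 'I_n * 'I_W)
     ((if (om i).1 then b1 else 1 - b1) * ((1 - b2) * b2 ^+ (om i).2)).

Definition prob_disp_ge (R : realType) (b1 b2 : R) (n : nat)
    (eta : int -> nat) (a : int) (W : nat) (r k v : nat) : \bar R :=
  \esum_(om in [set: Omega n W])
    (if (v%:Z <= displacement eta a W (chi_of a om) (j_of a om) n r k)%R
     then (weight b1 b2 om)%:E else 0%E).

(* Main.v *)
Require Import Defs.
From HB Require Import structures.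
From mathcomp Require Import all_boot all_order all_algebra.
From mathcomp Require Import all_classical all_reals all_analysis.
From mathcomp Require Import zify ring lra.
Import Order.TTheory GRing.Theory Num.Theory.
Local Open Scope ring_scope.
Set Implicit Arguments. Unset Strict Implicit. Unset Printing Implicit Defensive.
Definition caf (lower : seq (int * int)) (x : int) :=
  has (fun pr : int * int => (pr.1 < x) && (x < pr.2)) [seq pr <- lower | pr.1 != pr.2].
Definition stayedf (lower : seq (int * int)) := [seq pr.1 | pr <- lower & pr.1 == pr.2].

Lemma sc_fst lower chi j prev ps :
  map fst (step_class lower chi j prev ps) = ps.
Proof. by elim: ps prev => [|x rest IH] prev //=; rewrite IH. Qed.

Lemma sc_size lower chi j prev ps :
  size (step_class lower chi j prev ps) = size ps.
Proof. by rewrite -(size_map fst) sc_fst. Qed.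

Lemma omin_le_r o z : omin o z <= z.
Proof. by case: o => //= u; rewrite ge_min lexx orbT. Qed.

Lemma ominl_le s u : u \in s -> exists u0, ominl s = Some u0 /\ u0 <= u.
Proof.
case: s => // u1 s /=; exists (foldr Num.min u1 s); split => //.
elim: s u H => [|w s IH] u /=; rewrite ?inE.
  by move/eqP->.
case/or3P=> [/eqP->|/eqP->|us]; rewrite ge_min ?lexx ?orbT //.
  by apply/orP; right; apply: (IH u1); rewrite inE eqxx.
by apply/orP; right; apply: IH; rewrite inE us orbT.
Qed.

Lemma ominl_gt s x : all (fun u => x < u) s -> forall u0, ominl s = Some u0 -> x < u0.
Proof.
case: s => // u1 s /= /andP[h1 hs] u0 [<-].
elim: s hs => //= w s IH /andP[hw hs]; rewrite lt_min hw IH //.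
Qed.

Lemma sc2 lower chi j prev ps q :
  q \in step_class lower chi j prev ps ->
  q.2 = q.1 \/
  [/\ ~~ caf lower q.1,
      (forall pr, pr \in lower -> pr.1 != pr.2 -> q.1 < pr.1 -> q.2 <= pr.1) &
      q.2 <= advance (stayedf lower) q.1 (j q.1)].
Proof.
elim: ps prev => [|x rest IH] prev //=; rewrite inE => /orP[/eqP->|]; last exact: IH.
rewrite /=.
case: ifP => [_|]; first by left.
move/negbT; rewrite negb_or => /andP[nca _]; right; split => //.
- move=> pr prl prm xp.
  have : pr.1 \in [seq pr.1 | pr <- [seq pr <- lower | pr.1 != pr.2] & x < pr.1].
    by apply: map_f; rewrite !mem_filter prm xp prl.
  case/ominl_le => u0 [-> u0le] /=.
  by apply: le_trans u0le; rewrite ge_min lexx.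
- apply: le_trans (omin_le_r _ _) _; exact: omin_le_r.
Qed.
Lemma advance_gt s x (j : nat) : (0 < j)%N -> x < advance s x j.
Proof.
move=> j0; rewrite /advance /=.
have -> : count_free s x 0 = 0%N by [].
case: j j0 => // j _ /=.
by rewrite ltrDl ltz_nat.
Qed.

Lemma sc1 lower chi j prev ps q : (forall y, (0 < j y)%N) -> sorted <%R ps ->
  q \in step_class lower chi j prev ps -> q.2 = q.1 -> caf lower q.1 || chi q.1.
Proof.
move=> hj.
elim: ps prev => [|x rest IH] prev //= srt; rewrite inE => /orP[/eqP->|]; last first.
  by apply: IH; apply: (path_sorted srt).
rewrite /caf /=.
case: ifP => [/orP[->//|/andP[_ ->]]|_ e]; first by rewrite orbT.
exfalso; move: e; apply/eqP; rewrite gt_eqF //.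
have hV := advance_gt (stayedf lower) x (hj x).
have hy : omin (ohead rest) (advance (stayedf lower) x (j x)) > x.
  case: rest srt {IH} => [|y r] /=; first by [].
  by case/andP => xy _; rewrite lt_min xy.
case E: (ominl _) => [u0|] //=.
rewrite lt_min hy andbT; apply: (ominl_gt _ E).
by apply/allP => u /mapP [pr]; rewrite mem_filter => /andP[? _] ->.
Qed.
Lemma size_run eta a W chi j m : size (run eta a W chi j m) = m.
Proof. by elim: m => //= m IH; rewrite size_rcons IH. Qed.

Lemma nth_run eta a W chi j m c : (c < m)%N ->
  nth [::] (run eta a W chi j m) c =
  step_class (flatten (run eta a W chi j c)) (chi c.+1) (j c.+1) None (positions eta a W c.+1).
Proof.
elim: m => // m IH cm /=; rewrite nth_rcons size_run.
case: ltnP => [cm'|mc]; first exact: IH.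
have -> : c = m by apply/eqP; rewrite eqn_leq mc -ltnS cm.
by rewrite eqxx.
Qed.

Lemma mem_flatten_run eta a W chi j m q :
  q \in flatten (run eta a W chi j m) <->
  exists c, (c < m)%N /\ q \in step_class (flatten (run eta a W chi j c)) (chi c.+1) (j c.+1) None (positions eta a W c.+1).
Proof.
elim: m => [|m IH] /=; first by split => // -[c []].
rewrite flatten_rcons mem_cat; split.
  case/orP => [/IH [c [cm h]]|h]; first by exists c; split => //; apply: ltnW.
  by exists m; split.
move=> [c [cm h]]; apply/orP; move: cm; rewrite ltnS leq_eqVlt => /orP[/eqP e|cm].
  by right; rewrite -e.
by left; apply/IH; exists c.
Qed.

Lemma mem_positions eta a W r s :
  (s \in positions eta a W r) = (eta s == r) && (a <= s < a + W%:Z).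
Proof.
rewrite /positions mem_filter; congr andb.
apply/idP/idP => [/mapP [i]|/andP[h1 h2]].
  by rewrite mem_iota => /andP[_ hi] ->; apply/andP; split; lia.
apply/mapP; exists `|s - a|%N; first by rewrite mem_iota; apply/andP; split; lia.
lia.
Qed.

Lemma sorted_positions eta a W r : sorted <%R (positions eta a W r).
Proof.
rewrite /positions; apply: sorted_filter; first exact: lt_trans.
rewrite sorted_map; apply: sub_sorted (iota_ltn_sorted 0 W) => i k /= h.
by rewrite ltrD2l ltz_nat.
Qed.

Lemma flatten_run_cls eta a W chi j m q :
  q \in flatten (run eta a W chi j m) -> (0 < eta q.1 <= m)%N.
Proof.
case/mem_flatten_run => c [cm h].
have : q.1 \in positions eta a W c.+1.
  by rewrite -(sc_fst (flatten (run eta a W chi j c)) (chi c.+1) (j c.+1) None (positions eta a W c.+1)); apply: (map_f fst).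
by rewrite mem_positions => /andP[/eqP -> _].
Qed.

Lemma flatten_run_ex (eta : int -> nat) (a : int) (W : nat) chi j m (s : int) :
  (0 < eta s <= m)%N -> a <= s < a + W%:Z ->
  exists q : int * int, [/\ q.1 = s, q \in flatten (run eta a W chi j m) &
    q \in step_class (flatten (run eta a W chi j (eta s).-1)) (chi (eta s)) (j (eta s)) None (positions eta a W (eta s))].
Proof.
move=> /andP[h0 hm] hs.
have : s \in map fst (step_class (flatten (run eta a W chi j (eta s).-1)) (chi (eta s)) (j (eta s)) None (positions eta a W (eta s))).
  by rewrite sc_fst mem_positions eqxx.
case/mapP => q qin e.
exists q; split.
- by rewrite e.
- apply/mem_flatten_run; exists (eta s).-1; split; first by lia.
  by rewrite prednK.
- exact: qin.
Qed.
Lemma ivt_nat (f : nat -> nat) (jj D : nat) : f 0%N = 0%N -> (forall d, f d.+1 <= (f d).+1)%N ->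
  (jj <= f D)%N -> exists d, (d <= D)%N /\ f d = jj.
Proof.
move=> f0 fS; elim: D => [|D IH] h.
  by exists 0%N; split => //; move: h; rewrite f0; lia.
case: (leqP jj (f D)) => [/IH [d [dD e]]|lt]; first by exists d; split => //; lia.
by exists D.+1; split => //; have := fS D; lia.
Qed.

Lemma count_free_S s x d :
  count_free s x d.+1 = addn (count_free s x d) ((x + (d.+1)%:Z) \notin s).
Proof. by rewrite /count_free -addn1 iotaD count_cat /= addn0 add0n addn1. Qed.

Lemma adv_count s x (jj v : nat) : (0 < jj)%N -> (0 < v)%N ->
  x + v%:Z <= advance s x jj -> (count_free s x v.-1 < jj)%N.
Proof.
move=> j0 v0; rewrite /advance lerD2l lez_nat => hv.
rewrite ltnNge; apply/negP => hc.
have fS : forall d, (count_free s x d.+1 <= (count_free s x d).+1)%N.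
  by move=> d'; rewrite count_free_S; case: (_ \notin _); lia.
have [d [dv e]] := @ivt_nat (count_free s x) jj v.-1 erefl fS hc.
have := @before_find _ 0%N (fun d => count_free s x d == jj) (iota 0 (jj + size s).+1) d.
have hN := find_size (fun d => count_free s x d == jj) (iota 0 (jj + size s).+1).
rewrite size_iota in hN.
rewrite nth_iota; last by lia.
by rewrite add0n e eqxx => /(_ _)/negP; apply; lia.
Qed.
Lemma comb (eta : int -> nat) (a : int) (W : nat) (chi : nat -> int -> bool) (j : nat -> int -> nat)
  (hj : forall c y, (0 < j c y)%N)
  (n : nat) (heta_box : forall x, eta x != 0%N -> (a <= x) && (x < a + W%:Z))
  (v r k : nat) (hr : (1 <= r <= n)%N)
  (hk : (1 <= k <= size (positions eta a W r))%N) :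
  let x := nth 0 (positions eta a W r) k.-1 in
  v%:Z <= displacement eta a W chi j n r k ->
  (forall s, (0 < eta s < r)%N -> x < s -> s <= x + (v.-1)%:Z -> chi (eta s) s) /\
  (v.-1 - count (fun i : nat => (0 < eta (x + (i.+1)%:Z)%R < r)%N) (iota 0 v.-1) < j r x)%N.
Proof.
move=> x.
rewrite /displacement nth_run; last by lia.
have er : r.-1.+1 = r by lia.
rewrite er.
set lower := flatten (run eta a W chi j r.-1).
set sc := step_class lower (chi r) (j r) None (positions eta a W r).
have hsz : (k.-1 < size sc)%N by rewrite /sc sc_size; lia.
have pin : nth (0, 0) sc k.-1 \in sc by apply: mem_nth.
have px : (nth (0, 0) sc k.-1).1 = x.
  by rewrite /x -(sc_fst lower (chi r) (j r) None (positions eta a W r)) -/sc (nth_map (0,0)).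
have xin : x \in positions eta a W r.
  rewrite /x; apply: mem_nth; case/andP: hk => k0 ks; apply: (leq_trans _ ks); by rewrite ltn_predL.
move: xin; rewrite mem_positions => /andP[/eqP ex xbox].
move: pin px; set p := nth (0, 0) sc k.-1 => pin px hdisp.
clearbody p x.
case: v hdisp => [|v] hdisp.
  split; first by move=> s _ h1 h2; exfalso; move: h1 h2 => /=; rewrite addr0 => h1 h2; have := lt_le_trans h1 h2; rewrite ltxx.
  by rewrite sub0n hj.
rewrite [v.+1.-1]/=.
case: (sc2 pin) => [e|[nca hU hV]].
  by exfalso; move: hdisp; rewrite e subrr; lia.
rewrite px in nca hU hV.
have hpx : x + (v.+1)%:Z <= p.2 by lia.
split.
- move=> s /andP[s0 sr] xs sx.
  have sbox : a <= s < a + W%:Z by apply: heta_box; rewrite -lt0n.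
  have [q [q1 qlow qsc]] := @flatten_run_ex eta a W chi j r.-1 s ltac:(lia) sbox.
  have q21 : q.2 = q.1.
    apply/eqP; apply/negPn/negP => qm.
    have := hU q qlow; rewrite eq_sym in qm; move=> /(_ qm).
    rewrite q1 => /(_ xs) h; have := le_trans hpx (le_trans h sx); by rewrite lerD2l lez_nat ltnn.
  have := sc1 (fun y => hj (eta s) y) (sorted_positions eta a W (eta s)) qsc q21.
  rewrite q1 => /orP[|//].
  case/hasP => pr; rewrite mem_filter => /andP[prm prl] /andP[p1s sp2].
  have prlow : pr \in lower.
    move/mem_flatten_run: prl => [c [cs h]].
    by apply/mem_flatten_run; exists c; split => //; lia.
  have := flatten_run_cls prlow => /andP[_ hc].
  case: (ltgtP pr.1 x) => [hlt|hgt|heq].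
  + exfalso; move/negP: nca; apply; apply/hasP; exists pr.
      by rewrite mem_filter prm prlow.
    by rewrite hlt /=; lia.
  + exfalso; have h := hU pr prlow prm hgt.
    have := le_trans hpx (le_trans h (le_trans (ltW p1s) sx)); by rewrite lerD2l lez_nat ltnn.
  + by exfalso; move: hc; rewrite heq ex; lia.
- have hadv : x + (v.+1)%:Z <= advance (stayedf lower) x (j r x) by apply: le_trans hV.
  have := adv_count (hj r x) (ltn0Sn v) hadv; rewrite [v.+1.-1]/=.
  apply: leq_ltn_trans.
  rewrite leq_subLR /count_free.
  set P := (fun i : nat => _ && _).
  apply: (@leq_trans (count P (iota 0 v) + count (predC P) (iota 0 v))).
    by rewrite count_predC size_iota.
  rewrite leq_add2l; apply: sub_count => i /= hi; apply/negP => /mapP [pr].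
  rewrite mem_filter => /andP[_ prl] e.
  have := flatten_run_cls prl; rewrite -e => /andP[h0 h1].
  move/negP: hi; apply; apply/andP; split => //; apply: leq_ltn_trans h1 _; lia.
Qed.
Section Prob.
Variable R : realType.

Lemma sum_box_bound (I : finType) (g : I -> bool * nat -> R) (c : I -> R)
  (g0 : forall i p, 0 <= g i p)
  (gc : forall i M, \sum_(p : bool * 'I_M) g i (p.1, val p.2) <= c i)
  (s : seq {ffun I -> bool * nat}) : uniq s ->
  \sum_(om <- s) \prod_i g i (om i) <= \prod_i c i.
Proof.
move=> us.
set M := (\max_(om <- s) \max_i (om i).2).+1.
pose proj (om : {ffun I -> bool * nat}) : {ffun I -> bool * 'I_M} :=
  [ffun i => ((om i).1, inord (om i).2)].
pose emb (f : {ffun I -> bool * 'I_M}) : {ffun I -> bool * nat} :=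
  [ffun i => ((f i).1, val (f i).2)].
have ep : {in s, cancel proj emb}.
  move=> om oms; apply/ffunP => i; rewrite !ffunE /=.
  rewrite inordK; first by case: (om i).
  rewrite /M ltnS.
  apply: (leq_trans _ (@leq_bigmax_seq _ s xpredT (fun om => \max_i (om i).2) om oms erefl)).
  exact: (@leq_bigmax I (fun i0 => (om i0).2) i).
have -> : s = map emb (map proj s).
  by rewrite -map_comp map_id_in //.
have ut : uniq (map proj s) by rewrite (map_inj_in_uniq (can_in_inj ep)).
rewrite big_map big_uniq //.
apply: (@le_trans _ _ (\sum_(f : {ffun I -> bool * 'I_M}) \prod_i g i (emb f i))).
  rewrite [X in _ <= X](bigID (fun f => f \in map proj s)) /= lerDl.
  by apply: sumr_ge0 => f _; apply: prodr_ge0 => i _.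
have -> : \sum_(f : {ffun I -> bool * 'I_M}) \prod_i g i (emb f i) =
          \prod_i \sum_(p : bool * 'I_M) g i (p.1, val p.2).
  rewrite (bigA_distr_bigA (fun i (p : bool * 'I_M) => g i (p.1, val p.2))).
  by apply: eq_bigr => f _; apply: eq_bigr => i _; rewrite ffunE.
apply: ler_prod => i _; rewrite gc andbT.
by apply: sumr_ge0 => p _.
Qed.


Lemma esum_box_bound (I : finType) (g : I -> bool * nat -> R) (c : I -> R)
  (g0 : forall i p, 0 <= g i p)
  (gc : forall i M, \sum_(p : bool * 'I_M) g i (p.1, val p.2) <= c i) :
  (\esum_(om in [set: {ffun I -> bool * nat}]) (\prod_i g i (om i))%:E <= (\prod_i c i)%:E)%E.
Proof.
apply: ge_ereal_sup => _ [X [finX _] <-].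
rewrite fsbig_finite // sumEFin lee_fin.
apply: sum_box_bound => //; exact: finmap.fset_uniq.
Qed.

Definition factor (b1 b2 : R) (p : bool * nat) : R :=
  (if p.1 then b1 else 1 - b1) * ((1 - b2) * b2 ^+ p.2).

Lemma geom (b2 : R) (K M : nat) :
  \sum_(m < M) ((1 - b2) * b2 ^+ m) * (K <= m)%N%:R = b2 ^+ K - b2 ^+ (maxn K M).
Proof.
elim: M => [|M IH]; first by rewrite big_ord0 maxn0 subrr.
rewrite big_ord_recr /= IH.
case: (leqP K M) => h.
  rewrite mulr1 (maxn_idPr (leqW h)) exprS; ring.
by rewrite mulr0 addr0 (maxn_idPl h).
Qed.

Lemma coord_bound (b1 b2 : R) (hb1 : 0 <= b1) (hb1' : b1 <= 1) (hb2 : 0 <= b2) (hb2' : b2 <= 1)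
  (LB : bool) (K M : nat) :
  \sum_(p : bool * 'I_M) factor b1 b2 (p.1, val p.2) * ((LB ==> p.1) && (K <= val p.2)%N)%:R
  <= (if LB then b1 else 1) * b2 ^+ K.
Proof.
rewrite -(pair_bigA _ (fun (b : bool) (m : 'I_M) => factor b1 b2 (b, val m) * ((LB ==> b) && (K <= val m)%N)%:R)).
rewrite big_bool /=.
have G : \sum_(m < M) ((1 - b2) * b2 ^+ m) * (K <= m)%N%:R <= b2 ^+ K.
  rewrite geom lerBlDr lerDl; exact: exprn_ge0.
have G0 : 0 <= \sum_(m < M) ((1 - b2) * b2 ^+ m) * (K <= m)%N%:R.
  apply: sumr_ge0 => m _; apply: mulr_ge0; last by case: (_ <= _)%N.
  by apply: mulr_ge0; [rewrite subr_ge0|exact: exprn_ge0].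
case: LB => /=.
  rewrite (eq_bigr (fun m : 'I_M => b1 * (((1 - b2) * b2 ^+ m) * (K <= m)%N%:R))); last first.
    by move=> m _; rewrite /factor /= !mulrA.
  rewrite [X in _ + X]big1 ?addr0; last by move=> m _; rewrite mulr0.
  rewrite -mulr_sumr; apply: ler_wpM2l => //.
rewrite (eq_bigr (fun m : 'I_M => b1 * (((1 - b2) * b2 ^+ m) * (K <= m)%N%:R))); last first.
  by move=> m _; rewrite /factor /= !mulrA.
rewrite [X in _ + X](eq_bigr (fun m : 'I_M => (1 - b1) * (((1 - b2) * b2 ^+ m) * (K <= m)%N%:R))); last first.
  by move=> m _; rewrite /factor /= !mulrA.
rewrite -!mulr_sumr -mulrDl (addrC b1) subrK mul1r; apply: le_trans G; by rewrite mul1r.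
Qed.
End Prob.
Lemma lookup_coord n W a (om : Omega n W) (i : 'I_n * 'I_W) :
  lookup a om (i.1 : nat).+1 (a + ((i.2 : nat))%:Z) = om i.
Proof.
rewrite /lookup; case: pickP => [i' /andP[/eqP h1 /eqP h2]|/(_ i)]; last first.
  by rewrite /= eqxx eqxx.
congr (om _); case: i' h1 h2 => c' w'; case: i => c w /= h1 h2.
congr (_, _); apply: val_inj => //=.
by move/addrI: h2 => [].
Qed.

Unset Implicit Arguments. Set Strict Implicit.
Theorem lemma2p10 (R : realType) (b1 b2 : R)
  (hb1 : 0 < b1) (hb12 : b1 < b2) (hb2 : b2 < 1)
  (n : nat) (eta : int -> nat) (a : int) (W : nat)
  (heta_cls : forall x, (eta x <= n)%N)
  (heta_box : forall x, eta x != 0%N -> (a <= x) && (x < a + W%:Z))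
  (v r k : nat) (hr : (1 <= r <= n)%N)
  (hk : (1 <= k <= size (positions eta a W r))%N) :
  (prob_disp_ge b1 b2 n eta a W r k v <= (b2 ^ (v%:Z - 1))%:E)%E.
Proof.
destruct n as [|n]; first by move: hr; lia.
destruct W as [|W]; first by move: hk; rewrite /positions /=; lia.
set x := nth 0 (positions eta a W.+1 r) k.-1.
have xin : x \in positions eta a W.+1 r.
  rewrite /x; apply: mem_nth; case/andP: hk => k0 ks; apply: (leq_trans _ ks); by rewrite ltn_predL.
move: xin; rewrite mem_positions => /andP[/eqP ex xbox].
set l' := count (fun i : nat => (0 < eta (x + (i.+1)%:Z)%R < r)%N) (iota 0 v.-1).
set K := (v.-1 - l')%N.
pose isL (i : 'I_n.+1 * 'I_W.+1) := [&& eta (a + (i.2:nat)%:Z) == (i.1 : nat).+1,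
   ((i.1:nat).+1 < r)%N, x < a + (i.2:nat)%:Z & a + (i.2:nat)%:Z <= x + (v.-1)%:Z].
pose isX (i : 'I_n.+1 * 'I_W.+1) := ((i.1 : nat).+1 == r) && (a + (i.2:nat)%:Z == x).
pose Ki i := if isX i then K else 0%N.
pose g i p := factor b1 b2 p * ((isL i ==> p.1) && (Ki i <= p.2)%N)%:R.
pose c i := (if isL i then b1 else 1) * b2 ^+ Ki i.
have b10 : 0 <= b1 by apply: ltW.
have b11 : b1 <= 1 by apply: ltW; apply: lt_trans hb12 hb2.
have b20 : 0 <= b2 by apply: ltW; apply: lt_trans hb1 hb12.
have b21 : b2 <= 1 by apply: ltW.
have f0 : forall p, 0 <= factor b1 b2 p.
  move=> p; rewrite /factor; apply: mulr_ge0; first by case: p.1; rewrite ?subr_ge0.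
  by apply: mulr_ge0; [rewrite subr_ge0|exact: exprn_ge0].
have g0 : forall i p, 0 <= g i p.
  by move=> i p; apply: mulr_ge0 => //; case: (_ && _).
apply: (@le_trans _ _ (\esum_(om in [set: Omega n.+1 W.+1]) (\prod_i g i (om i))%:E)).
  apply: le_esum => om _.
  case: ifP => hE; last by rewrite lee_fin; apply: prodr_ge0 => i _.
  rewrite lee_fin /weight le_eqVlt; apply/orP; left; apply/eqP.
  apply: eq_bigr => i _; rewrite /g.
  have [hi hii] := comb (chi := chi_of a om) (j := j_of a om) (fun _ _ => ltn0Sn _) heta_box hr hk hE.
  rewrite -/x in hi hii.
  have -> : (isL i ==> (om i).1) && (Ki i <= (om i).2)%N.
    apply/andP; split.
      apply/implyP => /and4P[/eqP e1 e2 e3 e4].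
      have := hi (a + (i.2 : nat)%:Z) ltac:(rewrite e1; lia) e3 e4.
      by rewrite /chi_of e1 lookup_coord.
    rewrite /Ki; case: ifP => // /andP[/eqP e1 /eqP e2].
    have ej : j_of a om r x = (om i).2.+1 by rewrite /j_of -e1 -e2 lookup_coord.
    by move: hii; rewrite ej -/l' -/K ltnS.
  by rewrite mulr1 /factor.
apply: le_trans (esum_box_bound g0 _) _.
  move=> i M; rewrite /g /c; exact: coord_bound.
rewrite lee_fin.
pose Q := (fun i : nat => (0 < eta (x + (i.+1)%:Z)%R < r)%N).
have hL : (l' <= #|isL|)%N.
  pose h (d : nat) : 'I_n.+1 * 'I_W.+1 :=
    (inord (eta (x + (d.+1)%:Z)%R).-1, inord (absz (x + (d.+1)%:Z - a)%R)).
  have boxd : forall d, Q d -> a <= x + (d.+1)%:Z < a + W.+1%:Z.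
    by move=> d qd; apply: heta_box; rewrite -lt0n; case/andP: qd.
  rewrite /l' -/Q -size_filter cardE -(size_map h); apply: uniq_leq_size.
    rewrite map_inj_in_uniq ?filter_uniq ?iota_uniq // => d1 d2.
    rewrite !mem_filter => /andP[q1 _] /andP[q2 _] /(congr1 (fun i => val i.2)) /=.
    have := boxd _ q1; have := boxd _ q2 => bx2 bx1.
    rewrite !inordK; clearbody x; lia.
  move=> i /mapP [d]; rewrite mem_filter mem_iota => /andP[qd dr] ->.
  have := boxd _ qd => bd.
  case/andP: qd => q0 qr.
  have e1 : ((inord (eta (x + (d.+1)%:Z)%R).-1 : 'I_n.+1) : nat) = (eta (x + (d.+1)%:Z)%R).-1.
    by rewrite inordK //; move: (heta_cls (x + (d.+1)%:Z)%R) q0; clearbody x; lia.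
  have e2 : ((inord (absz (x + (d.+1)%:Z - a)%R) : 'I_W.+1) : nat) = absz (x + (d.+1)%:Z - a)%R.
    by rewrite inordK //; clearbody x; lia.
  have e3 : a + (absz (x + (d.+1)%:Z - a)%R)%:Z = x + (d.+1)%:Z by clearbody x; lia.
  rewrite mem_enum unfold_in /isL /h /= e1 e2 e3 prednK // eqxx qr /=.
  apply/andP; split; clearbody x; lia.
rewrite big_split /=.
have P1 : \prod_i (if isL i then b1 else 1) = b1 ^+ #|isL|.
  by rewrite -big_mkcond prodr_const.
have hr' : (r.-1 < n.+1)%N by lia.
have hx' : (absz (x - a)%R < W.+1)%N by clearbody x; lia.
pose iX : 'I_n.+1 * 'I_W.+1 := (Ordinal hr', Ordinal hx').
have P2 : \prod_i b2 ^+ Ki i = b2 ^+ K.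
  rewrite prodrXr (bigD1 iX) //= big1 ?addn0.
    rewrite /Ki /isX /= prednK; last by lia.
    have -> : a + (absz (x - a)%R)%:Z = x by clearbody x; lia.
    by rewrite !eqxx.
  move=> i ni; rewrite /Ki; case: ifP => // /andP[/eqP e1 /eqP e2].
  exfalso; move/eqP: ni; apply; case: i e1 e2 => [[c0 hc] [w hw]] /= e1 e2.
  congr (_, _); apply: val_inj => /=; first by lia.
  by clearbody x; lia.
rewrite P1 P2.
have l'le : (l' <= v.-1)%N by rewrite /l' (leq_trans (count_size _ _)) // size_iota.
apply: (@le_trans _ _ (b2 ^+ l' * b2 ^+ K)).
  apply: ler_wpM2r; first exact: exprn_ge0.
  apply: (@le_trans _ _ (b1 ^+ l')); first exact: ler_wiXn2l.
  by apply: lerXn2r => //; rewrite ?nnegrE ?ltW.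
rewrite -exprD /K subnKC //.
have fin : forall u : nat, b2 ^+ u.-1 <= b2 ^ (u%:Z - 1).
  case => [|u] /=; last by rewrite (_ : (u.+1%:Z - 1) = u%:Z) //; lia.
  rewrite expr0 (_ : (0%:Z - 1) = -1) // exprN1 invf_ge1 //; exact: lt_trans hb12.
exact: fin.
Qed.
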